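(* Let $q>0$ be a rational number. There exists a finitely presented group $G$ such that $RG(G)=q$.
   Context: For a group $A$, $d(A)$ is the minimal number of generators of $A$. The (absolute) rank gradient of a finitely generated group $G$ is $RG(G)=\inf_{K}\frac{d(K)-1}{[G:K]}$, the infimum over all finite index subgroups $K$ of $G$. *)

(* Defs.v *)
From mathcomp Require Import all_boot all_order all_algebra.
Set Implicit Arguments. Unset Strict Implicit. Unset Printing Implicit Defensive.
Import Order.TTheory GRing.Theory Num.Theory.

Record AbsGroup := {
  carrier :> Type;
  gmul : carrier -> carrier -> carrier;
  ginv : carrier -> carrier;
  gone : carrier;
  gmulA : forall x y z, gmul x (gmul y z) = gmul (gmul x y) z;
  gmul1g : forall x, gmul gone x = x;
  gmulg1 : forall x, gmul x gone = x;
  gmulVg : forall x, gmul (ginv x) x = gone;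
  gmulgV : forall x, gmul x (ginv x) = gone
}.

(* Words in n letters and their inverses: (i, false) = x_i, (i, true) = x_i^-1. *)
Definition word (n : nat) := seq ('I_n * bool).

Definition eval_word (G : AbsGroup) (n : nat) (f : 'I_n -> G) (w : word n) : G :=
  foldr (fun (l : 'I_n * bool) acc =>
           @gmul G (if l.2 then @ginv G (f l.1) else f l.1) acc) (@gone G) w.

Definition inv_letter (n : nat) (l : 'I_n * bool) : 'I_n * bool := (l.1, ~~ l.2).

(* The congruence on words defining the group < x_1..x_n | R >:
   generated by free cancellation and killing the relators. *)
Inductive pres_eq (n : nat) (R : seq (word n)) : word n -> word n -> Prop :=
  | pe_refl w : pres_eq R w w
  | pe_sym u v : pres_eq R u v -> pres_eq R v u
  | pe_trans u v w : pres_eq R u v -> pres_eq R v w -> pres_eq R u w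
  | pe_cat u u' v v' : pres_eq R u u' -> pres_eq R v v' ->
                       pres_eq R (u ++ v) (u' ++ v')
  | pe_cancel l : pres_eq R [:: l; inv_letter l] [::]
  | pe_rel r : r \in R -> pres_eq R r [::].

(* G is finitely presented: G is isomorphic to < x_1..x_n | R > with R finite,
   i.e. there is an assignment of generators that is onto and whose word
   kernel is exactly the congruence generated by R. *)
Definition finitely_presented (G : AbsGroup) : Prop :=
  exists (n : nat) (R : seq (word n)) (x : 'I_n -> G),
    (forall g : G, exists w : word n, eval_word x w = g) /\
    (forall u v : word n, eval_word x u = eval_word x v <-> pres_eq R u v).

Definition subgroup (G : AbsGroup) (K : G -> Prop) : Prop :=
  K (@gone G) /\ (forall x y, K x -> K y -> K (@gmul G x y)) /\
  (forall x, K x -> K (@ginv G x)).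

(* [G : K] = m : there are exactly m left cosets gK. *)
Definition has_index (G : AbsGroup) (K : G -> Prop) (m : nat) : Prop :=
  exists t : 'I_m -> G, forall g : G, exists! i : 'I_m, K (@gmul G (@ginv G (t i)) g).

Definition generated_by_k (G : AbsGroup) (K : G -> Prop) (k : nat) : Prop :=
  exists s : 'I_k -> G, (forall i, K (s i)) /\
    (forall g : G, K g -> exists w : word k, eval_word s w = g).

Definition min_gens (G : AbsGroup) (K : G -> Prop) (k : nat) : Prop :=
  generated_by_k K k /\ forall j, generated_by_k K j -> (k <= j)%N.

Local Open Scope ring_scope.

(* RG(G) = r : r is the infimum of (d(K)-1)/[G:K] over finite index subgroups K. *)
Definition rank_gradient_is (G : AbsGroup) (r : rat) : Prop :=
  (forall (K : G -> Prop) (m k : nat), subgroup K -> has_index K m -> min_gens K k ->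
      r <= (k%:Q - 1) / m%:Q) /\
  (forall eps : rat, 0 < eps -> exists (K : G -> Prop) (m k : nat),
      [/\ subgroup K, has_index K m, min_gens K k & (k%:Q - 1) / m%:Q < r + eps]).

(* Main.v *)
Require Import Defs.
From mathcomp Require Import all_boot all_order all_algebra.
From mathcomp Require Import zify.
From Stdlib Require Import IndefiniteDescription.
Set Implicit Arguments. Unset Strict Implicit. Unset Printing Implicit Defensive.
Import Order.TTheory GRing.Theory Num.Theory.

Section FreeWords.
Variable r : nat.
Notation letter := ('I_r * bool)%type.

Lemma inv_letterK : involutive (@inv_letter r).
Proof. by case=> i b; rewrite /inv_letter /= negbK. Qed.

Lemma inv_letter_neq (l : letter) : inv_letter l != l.
Proof. by case: l => i b; rewrite /inv_letter /= xpair_eqE eqxx /=; case: b. Qed.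

Definition push (l : letter) (s : word r) : word r :=
  if s is l' :: t then (if l' == inv_letter l then t else l :: s) else [:: l].

Fixpoint reducedb (s : word r) : bool :=
  if s is l :: t then
    (if t is l' :: _ then l' != inv_letter l else true) && reducedb t
  else true.

Definition red (s : word r) : word r := foldr push [::] s.

Lemma push_reduced l s : reducedb s -> reducedb (push l s).
Proof.
case: s => [|l' t] //= /andP[H1 H2].
case: eqP => [_|/eqP Hne]; first by [].
by rewrite /= Hne H1 H2.
Qed.

Lemma red_reduced s : reducedb (red s).
Proof. by elim: s => [|l s IH] //=; apply: push_reduced. Qed.

Lemma pushK l s : reducedb s -> push (inv_letter l) (push l s) = s.
Proof.
case: s => [|l' t] /=; first by rewrite inv_letterK eqxx.
move=> /andP[H1 H2].
have [E|Hne] := eqVneq l' (inv_letter l); rewrite /=.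
  subst l'; case: t H1 H2 => [|l'' t'] //= H1 _.
  by rewrite (negbTE H1).
by rewrite inv_letterK eqxx.
Qed.

Lemma push_cons l s : reducedb (l :: s) -> push l s = l :: s.
Proof.
case: s => [|l' t] //= /andP[H1 _].
by case: eqP H1 => // ->; rewrite eqxx.
Qed.

Lemma reduced_tail l s : reducedb (l :: s) -> reducedb s.
Proof. by case/andP. Qed.

Lemma red_id s : reducedb s -> red s = s.
Proof.
elim: s => [|l s IH] // Hs /=.
by rewrite IH ?(reduced_tail Hs) // push_cons.
Qed.

Lemma foldr_push_reduced s t : reducedb s -> reducedb (foldr push s t).
Proof. by move=> Hs; elim: t => //= l t IH; apply: push_reduced. Qed.

Lemma foldr_push_push s l t : reducedb s -> reducedb t ->
  foldr push s (push l t) = push l (foldr push s t).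
Proof.
move=> Hs; case: t => [|l' t] //= Ht.
have [E|Hne] := eqVneq l' (inv_letter l) => //=.
subst l'; rewrite -{1}(inv_letterK l) pushK //.
exact: foldr_push_reduced.
Qed.

Lemma foldr_push_red s t : reducedb s -> foldr push s (red t) = foldr push s t.
Proof.
move=> Hs; elim: t => [|l t IH] //=.
by rewrite foldr_push_push ?red_reduced // IH.
Qed.

Lemma red_cat u v : red (u ++ v) = foldr push (red v) u.
Proof. by rewrite /red foldr_cat. Qed.

Lemma red_redl u v : red (red u ++ v) = red (u ++ v).
Proof. by rewrite !red_cat foldr_push_red // red_reduced. Qed.

Lemma red_redr u v : red (u ++ red v) = red (u ++ v).
Proof. by rewrite !red_cat red_id // red_reduced. Qed.

Lemma red_red u : red (red u) = red u.
Proof. by rewrite red_id // red_reduced. Qed.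

Definition invw (w : word r) : word r := rev (map (@inv_letter r) w).

Lemma invw_cons l w : invw (l :: w) = invw w ++ [:: inv_letter l].
Proof. by rewrite /invw /= rev_cons cats1. Qed.

Lemma invwK : involutive invw.
Proof.
elim=> [|l w IH] //; rewrite invw_cons /invw map_cat rev_cat /=.
by rewrite inv_letterK; congr (_ :: _); apply: IH.
Qed.

Lemma red_cancel x l w : red (x ++ [:: inv_letter l, l & w]) = red (x ++ w).
Proof.
rewrite !red_cat /= pushK //.
exact: red_reduced.
Qed.

Lemma red_invl w : red (invw w ++ w) = [::].
Proof.
elim: w => [|l w IH] //; rewrite invw_cons -catA /=.
by rewrite red_cancel.
Qed.

Lemma red_invr w : red (w ++ invw w) = [::].
Proof. by rewrite -{1}(invwK w) red_invl. Qed.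

End FreeWords.

Section Graph.
Local Open Scope ring_scope.
Variables (n r k : nat).
Notation letter := ('I_r * bool)%type.
Variable step : letter -> 'I_n -> 'I_n.
Hypothesis stepK : forall l v, step (inv_letter l) (step l v) = v.

Definition actw (w : word r) (v : 'I_n) : 'I_n := foldr step v w.

Lemma actw_cat u w v : actw (u ++ w) v = actw u (actw w v).
Proof. by rewrite /actw foldr_cat. Qed.

Lemma actw_invw w v : actw (invw w) (actw w v) = v.
Proof.
elim: w v => [|l w IH] v //=.
by rewrite invw_cons actw_cat /= stepK IH.
Qed.

Lemma actw_push l s v : actw (push l s) v = actw (l :: s) v.
Proof.
case: s => [|l' t] //=; case: eqP => [->|] //=.
by have := stepK (inv_letter l) (actw t v); rewrite inv_letterK => ->.
Qed.

Lemma actw_red w v : actw (red w) v = actw w v.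
Proof. by elim: w => [|l w IH] //=; rewrite actw_push /= IH. Qed.

Definition edge (l : letter) (u : 'I_n) : 'I_(n * r) :=
  mxvec_index (if l.2 then step l u else u) l.1.

Lemma edge_inv l u : edge (inv_letter l) (step l u) = edge l u.
Proof.
case: l => j [] /=; rewrite /edge /=; first by [].
by rewrite stepK.
Qed.

Fixpoint phi (w : word r) (v : 'I_n) : 'rV['F_2]_(n * r) :=
  if w is l :: w' then phi w' v + delta_mx 0 (edge l (actw w' v)) else 0.

Lemma F2_double (x : 'F_2) : x + x = 0.
Proof. by rewrite -mulr2n -mulr_natr (pchar_Fp_0 (p:=2)) // mulr0. Qed.

Lemma mx2_double m1 m2 (A : 'M['F_2]_(m1, m2)) : A + A = 0.
Proof. by apply/matrixP=> i j; rewrite !mxE F2_double. Qed.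

Lemma phi_cat u w v : phi (u ++ w) v = phi u (actw w v) + phi w v.
Proof.
elim: u => [|l u IH] /=; first by rewrite add0r.
by rewrite IH actw_cat addrAC.
Qed.

Lemma phi_invw w v : phi (invw w) (actw w v) = phi w v.
Proof.
elim: w v => [|l w IH] v //=.
rewrite invw_cons phi_cat /= add0r stepK IH.
by rewrite edge_inv.
Qed.

Lemma phi_push l s v : phi (push l s) v = phi (l :: s) v.
Proof.
case: s => [|l' t] //=; case: eqP => [->|] //=.
have := edge_inv (inv_letter l) (actw t v); rewrite inv_letterK => ->.
by rewrite -addrA mx2_double addr0.
Qed.

Lemma phi_red w v : phi (red w) v = phi w v.
Proof.
elim: w => [|l w IH] //=.
by rewrite phi_push /= IH actw_red.
Qed.

Variable v0 : 'I_n.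
Hypothesis reach : forall v, exists w : word r, actw w v0 = v.
Variable S : 'I_k -> word r.
Hypothesis Sloop : forall i, actw (S i) v0 = v0.
Definition expand (u : word k) : word r :=
  flatten [seq (if l.2 then invw (S l.1) else S l.1) | l <- u].
Hypothesis closure : forall w, actw w v0 = v0 -> exists u : word k, red w = red (expand u).

Definition Smat : 'M['F_2]_(k, n * r) := \matrix_i phi (S i) v0.

Lemma expand_loop u : actw (expand u) v0 = v0 /\ (phi (expand u) v0 <= Smat)%MS.
Proof.
elim: u => [|[i b] u [IH1 IH2]] /=; first by rewrite sub0mx.
rewrite actw_cat phi_cat IH1; split.
  by case: b => //=; rewrite -{1}(Sloop i) actw_invw.
apply: addmx_sub => //; case: b => /=.
  by rewrite -{1}(Sloop i) phi_invw -(rowK (fun i => phi (S i) v0)) row_sub.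
by rewrite -(rowK (fun i => phi (S i) v0)) row_sub.
Qed.

Lemma loop_sub w : actw w v0 = v0 -> (phi w v0 <= Smat)%MS.
Proof.
move=> /closure [u Hu]; rewrite -phi_red Hu phi_red.
by case: (expand_loop u).
Qed.

Definition dec (e : 'I_(n * r)) : 'I_n * 'I_r :=
  enum_val (cast_ord (esym (mxvec_cast n r)) e).

Lemma dec_index u j : dec (mxvec_index u j) = (u, j).
Proof. by rewrite /dec /mxvec_index cast_ordK enum_rankK. Qed.

Definition sig (j : 'I_r) (u : 'I_n) := step (j, false) u.

Definition Bmx : 'M['F_2]_(n * r, n) :=
  \matrix_e ('e_(dec e).1 + 'e_(sig (dec e).2 (dec e).1) : 'rV_n).

Lemma row_Bmx u j : row (mxvec_index u j) Bmx = 'e_u + 'e_(sig j u).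
Proof. by rewrite rowK dec_index. Qed.

Definition Cmx : 'cV['F_2]_n := const_mx 1.

Lemma Bmx_C : Bmx *m Cmx = 0.
Proof.
apply/row_matrixP => e; case/mxvec_indexP: e => u j.
rewrite row_mul row_Bmx row0 mulmxDl -!rowE.
have H : forall a : 'I_n, row a Cmx = const_mx 1 by move=> a; apply/rowP => i; rewrite !mxE.
by rewrite !H; apply/matrixP => a b; rewrite !mxE F2_double.
Qed.

Lemma rank_Bmx : (\rank Bmx + 1 <= n)%N.
Proof.
have H : (Cmx^T <= kermx Bmx^T)%MS by rewrite sub_kermx -trmx_mul Bmx_C trmx0.
have := mxrankS H; rewrite rank_rV mxrank_ker mxrank_tr.
have -> : (Cmx^T != 0) .
  apply/eqP => /matrixP /(_ 0 v0); rewrite !mxE => /eqP.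
  by rewrite oner_eq0.
move=> H1; have := rank_leq_col Bmx; lia.
Qed.

Lemma graph_bound : (n * r + 1 <= k + n)%N.
Proof.
have reach' v : exists w : seq ('I_r * bool), actw w v0 == v.
  by case: (reach v) => w /eqP; exists w.
pose p v := xchoose (reach' v).
have Hp v : actw (p v) v0 = v by apply/eqP; exact: xchooseP (reach' v).
pose P : 'M['F_2]_(n, n * r) := \matrix_v phi (p v) v0.
have Hpsi e : (('e_e + row e Bmx *m P)%R <= Smat)%MS.
  case/mxvec_indexP: e => u j.
  rewrite row_Bmx mulmxDl -!rowE !rowK.
  pose L := invw (p (sig j u)) ++ (j, false) :: p u.
  have HL : actw L v0 = v0.
    rewrite /L actw_cat /= Hp -[step _ u]/(sig j u).
    by have := actw_invw (p (sig j u)) v0; rewrite Hp.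
  have := loop_sub HL; rewrite /L phi_cat /= Hp -[step _ u]/(sig j u).
  have := phi_invw (p (sig j u)) v0; rewrite Hp => ->.
  have -> : edge (j, false) u = mxvec_index u j by [].
  set a := phi (p u) v0; set b := phi (p (sig j u)) v0; set c := 'e_(mxvec_index u j).
  move=> H; suff <- : b + (a + c) = 'e_(mxvec_index u j) + (a + b) by [].
  by rewrite (addrCA c a b) (addrCA b a c) (addrC b c).
have HZ : (kermx Bmx <= Smat)%MS.
  apply/row_subP => i; set z := row i (kermx Bmx).
  have Hz : z *m Bmx = 0 by rewrite /z -row_mul mulmx_ker row0.
  have -> : z = \sum_e z 0 e *: ('e_e + row e Bmx *m P).
    under eq_bigr do rewrite scalerDr.
    rewrite big_split /= -row_sum_delta.
    have -> : \sum_e z 0 e *: (row e Bmx *m P) = (z *m Bmx) *m P.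
      rewrite [z *m Bmx]mulmx_sum_row mulmx_suml; apply: eq_bigr => e _; by rewrite scalemxAl.
    by rewrite Hz mul0mx addr0.
  by apply: summx_sub => e _; apply: scalemx_sub; exact: Hpsi.
have := mxrankS HZ; rewrite mxrank_ker.
have := rank_leq_row Smat; have := rank_Bmx; have := rank_leq_row Bmx.
lia.
Qed.
End Graph.

Section GroupLemmas.
Variable G : AbsGroup.
Local Notation "x * y" := (@gmul G x y).
Local Notation "x ^-1" := (@ginv G x).
Local Notation "1" := (@gone G).

Lemma mulKg (x y : G) : x^-1 * (x * y) = y.
Proof. by rewrite gmulA gmulVg gmul1g. Qed.
Lemma mulVKg (x y : G) : x * (x^-1 * y) = y.
Proof. by rewrite gmulA gmulgV gmul1g. Qed.
Lemma inv_uniq (x y : G) : x * y = 1 -> y = x^-1.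
Proof. by move=> H; rewrite -(gmulg1 x^-1) -H mulKg. Qed.
Lemma invgK (x : G) : (x^-1)^-1 = x.
Proof. by symmetry; apply: inv_uniq; rewrite gmulVg. Qed.
Lemma invMg (x y : G) : (x * y)^-1 = y^-1 * x^-1.
Proof.
symmetry; apply: inv_uniq.
by rewrite -gmulA (gmulA y) gmulgV gmul1g gmulgV.
Qed.
Lemma inv1g : (1 : G)^-1 = 1.
Proof. by rewrite -{2}(gmulVg 1) gmulg1. Qed.
End GroupLemmas.

Section FG.
Variable r : nat.
Definition FGt := {w : word r | reducedb w}.
Definition fg_of (s : word r) : FGt := exist _ (red s) (red_reduced s).
Definition fg_mul (a b : FGt) : FGt := fg_of (val a ++ val b).
Definition fg_inv (a : FGt) : FGt := fg_of (invw (val a)).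
Definition fg_one : FGt := exist _ [::] isT.

Lemma fg_ofK (a : FGt) : fg_of (val a) = a.
Proof. by apply: val_inj; rewrite /= red_id //; case: a. Qed.

Lemma fg_mulA a b c : fg_mul a (fg_mul b c) = fg_mul (fg_mul a b) c.
Proof. by apply: val_inj; rewrite /= red_redl red_redr catA. Qed.
Lemma fg_mul1 a : fg_mul fg_one a = a.
Proof. exact: fg_ofK. Qed.
Lemma fg_mul1r a : fg_mul a fg_one = a.
Proof. by rewrite /fg_mul cats0 fg_ofK. Qed.
Lemma fg_mulV a : fg_mul (fg_inv a) a = fg_one.
Proof. by apply: val_inj; rewrite /= red_redl red_invl. Qed.
Lemma fg_mulVr a : fg_mul a (fg_inv a) = fg_one.
Proof. by apply: val_inj; rewrite /= red_redr red_invr. Qed.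
End FG.

Section Prod.
Variables (r b' : nat).
Definition Gt := (FGt r * 'I_b'.+1)%type.
Definition g_mul (x y : Gt) : Gt := (fg_mul x.1 y.1, (x.2 + y.2)%R).
Definition g_inv (x : Gt) : Gt := (fg_inv x.1, (- x.2)%R).
Definition g_one : Gt := (fg_one r, 0%R).
Lemma g_mulA x y z : g_mul x (g_mul y z) = g_mul (g_mul x y) z.
Proof. by rewrite /g_mul /= fg_mulA addrA. Qed.
Lemma g_mul1 x : g_mul g_one x = x.
Proof. by case: x => a c; rewrite /g_mul /= fg_mul1 add0r. Qed.
Lemma g_mul1r x : g_mul x g_one = x.
Proof. by case: x => a c; rewrite /g_mul /= fg_mul1r addr0. Qed.
Lemma g_mulV x : g_mul (g_inv x) x = g_one.
Proof. by case: x => a c; rewrite /g_mul /= fg_mulV addNr. Qed.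
Lemma g_mulVr x : g_mul x (g_inv x) = g_one.
Proof. by case: x => a c; rewrite /g_mul /= fg_mulVr addrN. Qed.
Definition Grp : AbsGroup :=
  @Build_AbsGroup Gt g_mul g_inv g_one g_mulA g_mul1 g_mul1r g_mulV g_mulVr.
End Prod.

Section App.
Variables (r b' m k : nat).
Local Notation G := (Grp r b').
Variable K : G -> Prop.
Hypothesis HK : subgroup K.
Variable t : 'I_m -> G.
Hypothesis Ht : forall g : G, exists! i : 'I_m, K (gmul (ginv (t i)) g).
Variable s : 'I_k -> G.
Hypothesis Hs : forall i, K (s i).
Hypothesis Hgen : forall g : G, K g -> exists w : word k, eval_word s w = g.

Let K1 : K (@gone G). Proof. by case: HK. Qed.
Let KM (x y : G) : K x -> K y -> K (gmul x y). Proof. by case: HK => _ [H _]; apply: H. Qed.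
Let KV (x : G) : K x -> K (ginv x). Proof. by case: HK => _ [_ H]; apply: H. Qed.

Definition cidx (g : G) : 'I_m :=
  proj1_sig (constructive_indefinite_description _
    (let: ex_intro i (conj H _) := Ht g in ex_intro _ i H)).

Lemma cidxP g : K (gmul (ginv (t (cidx g))) g).
Proof. by rewrite /cidx; case: constructive_indefinite_description. Qed.

Lemma cidx_uniq g i : K (gmul (ginv (t i)) g) -> cidx g = i.
Proof.
move=> Hi; have [j [Hj U]] := Ht g.
by rewrite -(U _ Hi) (U _ (cidxP g)).
Qed.

Lemma cidx_eq g h : K (gmul (ginv g) h) -> cidx h = cidx g.
Proof.
move=> H; apply: cidx_uniq.
have := KM (cidxP g) H; by rewrite -gmulA mulVKg.
Qed.

Lemma cidx_eqK g h : cidx g = cidx h -> K (gmul (ginv g) h).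
Proof.
move=> E; have := KM (KV (cidxP g)) (cidxP h).
by rewrite E invMg invgK -gmulA mulVKg.
Qed.

Lemma cidx_t i : cidx (t i) = i.
Proof. by apply: cidx_uniq; rewrite gmulVg. Qed.

Lemma cidx_mulL x g h : cidx g = cidx h -> cidx (gmul x g) = cidx (gmul x h).
Proof.
move=> E; apply: cidx_eq; rewrite invMg -gmulA mulKg.
exact: cidx_eqK.
Qed.

Definition clsw (w : FGt r) : {set 'I_m} := [set cidx ((w, d) : G) | d : 'I_b'.+1].

Lemma cidx_shift x y d e f : cidx ((x, d) : G) = cidx ((y, e) : G) ->
  cidx ((x, d + f)%R : G) = cidx ((y, e + f)%R : G).
Proof.
move=> /cidx_eqK H; symmetry; apply: cidx_eq.
suff -> : gmul (ginv ((x, d + f)%R : G)) ((y, e + f)%R : G) = gmul (ginv ((x, d) : G)) (y, e) by [].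
rewrite /= /g_mul /g_inv /=; congr (_, _).
by rewrite opprD addrACA [(- f + f)%R]addNr addr0.
Qed.

Lemma cls_sub x y d e : cidx ((x, d) : G) = cidx ((y, e) : G) -> clsw x \subset clsw y.
Proof.
move=> E; apply/subsetP => j /imsetP [d' _ ->].
have := cidx_shift (d' - d)%R E; rewrite addrC subrK => ->.
exact: imset_f.
Qed.

Lemma cls_shift x y d e : cidx ((x, d) : G) = cidx ((y, e) : G) -> clsw x = clsw y.
Proof. by move=> E; apply/eqP; rewrite eqEsubset !(cls_sub E) // (cls_sub (esym E)). Qed.

Definition S0 : {set {set 'I_m}} := [set clsw (t i).1 | i : 'I_m].

Lemma clsw_in w : clsw w \in S0.
Proof.
apply/imsetP; exists (cidx ((w, 0%R) : G)) => //.
apply: (@cls_shift _ _ 0%R (t (cidx ((w, 0%R) : G))).2).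
by rewrite -surjective_pairing cidx_t.
Qed.

Let x0S := clsw_in (fg_one r).
Definition code w : 'I_#|S0| := enum_rank_in x0S (clsw w).
Lemma code_val w : enum_val (code w) = clsw w.
Proof. exact: enum_rankK_in (clsw_in w). Qed.
Lemma code_surj i : exists w, code w = i.
Proof.
have /imsetP [j _ E] := enum_valP i; exists (t j).1.
by rewrite /code -E enum_valK_in.
Qed.
Lemma code_inj x y : code x = code y -> clsw x = clsw y.
Proof. by move=> E; rewrite -!code_val E. Qed.

Definition lelt (l : 'I_r * bool) : G := (fg_of [:: l], 0%R).
Definition stepS l (X : {set 'I_m}) : {set 'I_m} := [set cidx (gmul (lelt l) (t j)) | j in X].

Lemma stepS_cls l w : stepS l (clsw w) = clsw (fg_of (l :: val w)).
Proof.
rewrite /stepS /clsw -imset_comp; apply: eq_imset => d /=.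
rewrite (@cidx_mulL _ _ ((w, d) : G)) ?cidx_t //.
congr cidx; rewrite /= /g_mul /= add0r; congr (_, _).
Qed.

Definition step' l (i : 'I_#|S0|) : 'I_#|S0| := enum_rank_in x0S (stepS l (enum_val i)).

Lemma step_code l w : step' l (code w) = code (fg_of (l :: val w)).
Proof. by rewrite /step' code_val stepS_cls. Qed.

Lemma step'K l i : step' (inv_letter l) (step' l i) = i.
Proof.
have [w <-] := code_surj i; rewrite !step_code; congr code.
apply: val_inj => /=.
have := red_redr [:: inv_letter l] (l :: val w); rewrite /= => ->.
have := red_cancel [::] l (val w); rewrite /= => ->.
by rewrite red_id //; case: w.
Qed.

Lemma actw_code u w : actw step' u (code w) = code (fg_of (u ++ val w)).
Proof.
elim: u => [|l u IH] /=; first by rewrite fg_ofK.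
rewrite IH step_code; congr code; apply: val_inj => /=.
by have := red_redr [:: l] (u ++ val w); rewrite /=.
Qed.

Definition Sw (i : 'I_k) : word r := val (s i).1.

Lemma eval_fst u : val (eval_word s u).1 = red (expand Sw u).
Proof.
elim: u => [|[i []] u IH] //=; rewrite IH.
  by rewrite red_redl red_redr.
by rewrite red_redr.
Qed.

Lemma free_bound : (#|S0| * r + 1 <= k + #|S0|)%N.
Proof.
apply: (@graph_bound _ _ _ step' step'K (code (fg_one r)) _ Sw).
- move=> v; have [w <-] := code_surj v; exists (val w).
  by rewrite actw_code cats0 fg_ofK.
- move=> i; rewrite actw_code cats0 fg_ofK /code; congr enum_rank_in.
  apply: (@cls_shift _ _ (s i).2 0%R); rewrite -surjective_pairing.
  apply: cidx_eq; have -> : ((fg_one r, 0%R) : G) = @gone G by [].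
  rewrite inv1g gmul1g; exact: Hs.
- move=> w; rewrite actw_code cats0 => /code_inj E.
  have : cidx (@gone G) \in clsw (fg_of w) by rewrite E; apply: imset_f.
  case/imsetP => d _ /cidx_eqK; rewrite inv1g gmul1g => /Hgen [u Hu].
  exists u; rewrite -eval_fst Hu; by [].
Qed.

Lemma m_bound : (m <= #|S0| * b'.+1)%N.
Proof.
pose rep (i : 'I_#|S0|) : FGt r :=
  if [pick j | clsw (t j).1 == enum_val i] is Some j then (t j).1 else fg_one r.
have Hrep i : clsw (rep i) = enum_val i.
  rewrite /rep; case: pickP => [j /eqP // | H].
  by have /imsetP [j _ E] := enum_valP i; move: (H j); rewrite E eqxx.
pose f (p : 'I_#|S0| * 'I_b'.+1) : 'I_m := cidx ((rep p.1, p.2) : G).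
have Hsub : [set: 'I_m] \subset f @: setT.
  apply/subsetP => j _.
  have : j \in clsw (rep (code (t j).1)).
    rewrite Hrep code_val; apply/imsetP; exists (t j).2 => //.
    by rewrite -surjective_pairing cidx_t.
  case/imsetP => d _ ->; apply/imsetP; exists (code (t j).1, d) => //.
have := subset_leq_card Hsub; rewrite cardsT card_ord => H.
apply: (leq_trans H); apply: (leq_trans (leq_imset_card _ _)).
by rewrite cardsT card_prod !card_ord.
Qed.
End App.

Section PresGen.
Variables (N : nat) (R : seq (word N)).
Local Notation pe := (pres_eq R).

Lemma pe_ctx u a b v : pe a b -> pe (u ++ a ++ v) (u ++ b ++ v).
Proof. by move=> H; apply: pe_cat; [apply: pe_refl | apply: pe_cat => //; apply: pe_refl]. Qed.

Lemma pe_cons l a b : pe a b -> pe (l :: a) (l :: b).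
Proof. by move=> H; apply: (pe_cat (u := [:: l]) (pe_refl _ _) H). Qed.

Lemma pe_cancel' l : pe [:: inv_letter l; l] [::].
Proof. by have := pe_cancel R (inv_letter l); rewrite inv_letterK. Qed.

Lemma pe_rel' rr : rr \in R -> forall u v, pe (u ++ rr ++ v) (u ++ v).
Proof. by move=> H u v; have := pe_ctx u v (pe_rel H). Qed.

Lemma pe_cancel_ctx u l v : pe (u ++ [:: l, inv_letter l & v]) (u ++ v).
Proof. by have := pe_ctx u v (pe_cancel R l). Qed.

Lemma pe_cancel_ctx' u l v : pe (u ++ [:: inv_letter l, l & v]) (u ++ v).
Proof. by have := pe_ctx u v (pe_cancel' l). Qed.
End PresGen.

Lemma eval_cat (G : AbsGroup) N (f : 'I_N -> G) u v :
  eval_word f (u ++ v) = gmul (eval_word f u) (eval_word f v).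
Proof.
elim: u => [|l u IH] /=; first by rewrite gmul1g.
by rewrite IH gmulA.
Qed.

Section Pres.
Variables (r b' : nat).
Local Notation G := (Grp r b').
Local Notation b := b'.+1.
Local Notation L := ('I_r.+1 * bool)%type.

Definition ZY : 'I_b := inZp 1.
Definition gen (i : 'I_r.+1) : G :=
  match unlift ord_max i with
  | Some j => (fg_of [:: (j, false)], 0%R)
  | None => (fg_one r, ZY)
  end.

Definition yl : L := (ord_max, false).
Definition xl (l : 'I_r * bool) : L := (lift ord_max l.1, l.2).
Definition comm (j : 'I_r) : word r.+1 :=
  [:: xl (j, false); yl; xl (j, true); inv_letter yl].
Definition Rel : seq (word r.+1) := nseq b yl :: [seq comm j | j <- enum 'I_r].
Local Notation pe := (pres_eq Rel).

Lemma xl_inv l : xl (inv_letter l) = inv_letter (xl l).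
Proof. by []. Qed.

Lemma pe_yx l : pe [:: yl; xl l] [:: xl l; yl].
Proof.
have Hc j : comm j \in Rel by rewrite inE; apply/orP; right; apply: map_f; rewrite mem_enum.
have Hyx j : pe [:: yl; xl (j, false)] [:: xl (j, false); yl].
  set x := xl (j, false); set X := xl (j, true).
  have H1 : pe [:: yl; x] [:: x; yl; X; inv_letter yl; yl; x] :=
    pe_sym (pe_rel' (Hc j) [::] [:: yl; x]).
  have H2 : pe [:: x; yl; X; inv_letter yl; yl; x] [:: x; yl; X; x] :=
    pe_cancel_ctx' Rel [:: x; yl; X] yl [:: x].
  have H3 : pe [:: x; yl; X; x] [:: x; yl] :=
    pe_cancel_ctx' Rel [:: x; yl] x [::].
  exact: pe_trans H1 (pe_trans H2 H3).
case: l => j []; last exact: Hyx.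
set x := xl (j, false); set X := xl (j, true).
have H1 : pe [:: X; yl] [:: X; yl; x; X] := pe_sym (pe_cancel_ctx Rel [:: X; yl] x [::]).
have H2 : pe [:: X; yl; x; X] [:: X; x; yl; X] := pe_ctx [:: X] [:: X] (Hyx j).
have H3 : pe [:: X; x; yl; X] [:: yl; X] := pe_cancel_ctx' Rel [::] x [:: yl; X].
exact: pe_sym (pe_trans H1 (pe_trans H2 H3)).
Qed.

Lemma pe_y_map w : pe (yl :: map xl w) (map xl w ++ [:: yl]).
Proof.
elim: w => [|l w IH] /=; first exact: pe_refl.
apply: (pe_trans (pe_ctx [::] (map xl w) (pe_yx l))).
exact: pe_cons IH.
Qed.

Lemma pe_ys_map d w : pe (nseq d yl ++ map xl w) (map xl w ++ nseq d yl).
Proof.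
elim: d => [|d IH] /=; first by rewrite cats0; exact: pe_refl.
apply: (pe_trans (pe_cons yl IH)).
rewrite -cat1s -[_ :: nseq d yl]cat1s !catA.
apply: pe_cat; last exact: pe_refl.
exact: pe_y_map.
Qed.

Lemma nseqD' (T : Type) (x : T) n1 n2 : nseq (n1 + n2) x = nseq n1 x ++ nseq n2 x.
Proof. by elim: n1 => //= n1 ->. Qed.

Lemma Hrel_y : nseq b yl \in Rel.
Proof. by rewrite inE eqxx. Qed.

Lemma pe_ymod c : pe (nseq c yl) (nseq (c %% b) yl).
Proof.
elim/ltn_ind: c => c IH.
case: (ltnP c b) => Hc; first by rewrite modn_small //; exact: pe_refl.
have E : c = b + (c - b) by rewrite subnKC.
rewrite {1}E nseqD'.
apply: (pe_trans (pe_rel' Hrel_y [::] (nseq (c - b) yl))).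
rewrite /=; apply: (pe_trans (IH (c - b) _)); first lia.
rewrite {2}E modnDl; exact: pe_refl.
Qed.

Lemma pe_Y : pe [:: inv_letter yl] (nseq b' yl).
Proof.
apply: (pe_trans (pe_sym (pe_rel' Hrel_y [:: inv_letter yl] [::]))).
rewrite cats0 /=.
exact: (pe_cancel_ctx' Rel [::] yl (nseq b' yl)).
Qed.

Lemma pe_push l w : pe (map xl (l :: w)) (map xl (push l w)).
Proof.
case: w => [|l' w] /=; first exact: pe_refl.
case: eqP => [->|_]; last exact: pe_refl.
exact: (pe_cancel_ctx Rel [::] (xl l) (map xl w)).
Qed.

Definition nf (g : G) : word r.+1 := map xl (val g.1) ++ nseq g.2 yl.
Definition piece (l : L) : G := if l.2 then ginv (gen l.1) else gen l.1.

Lemma mod_aux (n c : nat) : n + c = (n.+1 - 1 %% n.+1) %% n.+1 + c %[mod n.+1].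
Proof.
case: n => [|n]; first by rewrite !modn1.
by rewrite (modn_small (m := 1)) // subn1 /= modnDml.
Qed.

Lemma nfE w c : nf ((w, c) : G) = map xl (val w) ++ nseq c yl.
Proof. by []. Qed.

Lemma step_nf l g : pe (l :: nf g) (nf (gmul (piece l) g)).
Proof.
case: g => [w c]; case: l => i bb; rewrite /piece /gen.
change (i, bb).1 with i; change (i, bb).2 with bb.
case: (unliftP ord_max i) => [j -> | ->].
- have -> : (if bb then g_inv ((fg_of [:: (j, false)], 0%R) : G) else (fg_of [:: (j, false)], 0%R))
      = (fg_of [:: (j, bb)], 0%R).
    by case: bb => //; rewrite /g_inv /= oppr0; congr (_, _); apply: val_inj.
  have -> : gmul ((fg_of [:: (j, bb)], 0%R) : G) (w, c) = ((fg_of (push (j, bb) (val w)), c) : G).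
    rewrite /= /g_mul; congr (_, _); last exact: add0r.
    apply: val_inj; rewrite /= !red_id //; case: w => //= w' Hw.
    exact: push_reduced.
  rewrite !nfE /= red_id; last by apply: push_reduced; case: w.
  apply: (pe_cat (u := xl (j, bb) :: map xl (val w))); last exact: pe_refl.
  exact: (pe_push (j, bb) (val w)).
- case: bb.
  + have -> : gmul (ginv ((fg_one r, ZY) : G)) (w, c) = ((w, (- ZY + c)%R) : G).
      by rewrite /= /g_mul; congr (_, _); apply: val_inj; rewrite /= red_id //; case: w.
    rewrite !nfE.
    apply: (pe_trans (pe_cat (u := [:: inv_letter yl]) pe_Y (pe_refl _ _))).
    rewrite catA; apply: (pe_trans (pe_cat (pe_ys_map b' (val w)) (pe_refl _ (nseq c yl)))).
    rewrite -catA -nseqD'; apply: pe_cat; first exact: pe_refl.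
    apply: (pe_trans (pe_ymod _)).
    suff -> : (b' + c) %% b = val (- ZY + c)%R by exact: pe_refl.
    by rewrite /= /ZY /= mod_aux.
  + have -> : gmul ((fg_one r, ZY) : G) (w, c) = ((w, (ZY + c)%R) : G).
      by rewrite /= /g_mul fg_mul1.
    rewrite !nfE.
    rewrite -cat_cons; apply: (pe_trans (pe_cat (pe_y_map (val w)) (pe_refl _ (nseq c yl)))).
    rewrite -catA /=; apply: pe_cat; first exact: pe_refl.
    apply: (pe_trans (pe_ymod c.+1)).
    suff -> : c.+1 %% b = val (ZY + c)%R by exact: pe_refl.
    by rewrite /= /ZY /= modnDml add1n.
Qed.

Lemma NF u : pe u (nf (eval_word gen u)).
Proof.
elim: u => [|l u IH]; first exact: pe_refl.
apply: (pe_trans (pe_cons l IH)).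
exact: step_nf.
Qed.

Lemma eval_map_xl w : eval_word gen (map xl w) = ((fg_of w, 0%R) : G).
Proof.
elim: w => [|[j bb] w IH]; first by congr (_, _); apply: val_inj.
rewrite /=.
rewrite IH /gen liftK.
have -> : (if bb then g_inv ((fg_of [:: (j, false)], 0%R) : G) else (fg_of [:: (j, false)], 0%R))
      = (fg_of [:: (j, bb)], 0%R).
  by case: bb => //; rewrite /g_inv /= oppr0; congr (_, _); apply: val_inj.
rewrite /= /g_mul addr0; congr (_, _); apply: val_inj.
by rewrite /fg_mul /fg_of /= red_red.
Qed.

Lemma eval_nseq_y c : eval_word gen (nseq c yl) = ((fg_one r, (ZY *+ c)%R) : G).
Proof.
elim: c => [|c IH] //=; rewrite IH /gen unlift_none /= /g_mul fg_mul1 mulrS //.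
Qed.

Lemma eval_nf g : eval_word gen (nf g) = g.
Proof.
case: g => w c; rewrite nfE eval_cat eval_map_xl eval_nseq_y /= /g_mul add0r.
congr (_, _); first by rewrite /fg_mul cats0 !fg_ofK.
apply: val_inj; rewrite Zp_mulrn /= /ZY /= modnMml mul1n modn_small //.
Qed.

Lemma eval_pe u v : pe u v -> eval_word gen u = eval_word gen v.
Proof.
elim=> {u v}.
- by [].
- by move=> u v _ ->.
- by move=> u v w _ -> _ ->.
- by move=> u u' v v' _ Hu _ Hv; rewrite !eval_cat Hu Hv.
- case=> i []; first by rewrite /= g_mul1r g_mulV.
  by rewrite /= g_mul1r g_mulVr.
- move=> rr; rewrite inE => /orP [/eqP -> | /mapP [j _ ->]].
    rewrite eval_nseq_y; congr (_, _); apply: val_inj.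
    by rewrite Zp_mulrn /= /ZY /= modnMml mul1n modnn.
  rewrite /comm /= /gen liftK unlift_none.
  set x := ((fg_of [:: (j, false)], 0%R) : G); set y := ((fg_one r, ZY) : G).
  have Hc : g_mul y (g_inv x) = g_mul (g_inv x) y.
    by rewrite /g_mul fg_mul1 fg_mul1r addrC.
  by rewrite g_mul1r (g_mulA y) Hc -g_mulA g_mulVr g_mul1r g_mulVr.
Qed.

Lemma Grp_fp : finitely_presented G.
Proof.
exists r.+1, Rel, gen; split.
  by move=> g; exists (nf g); exact: eval_nf.
move=> u v; split; last exact: eval_pe.
move=> E; apply: (pe_trans (NF u)); rewrite E.
exact: pe_sym (NF v).
Qed.
End Pres.

Lemma LB (a b' : nat) (K : Grp a.+1 b' -> Prop) m k :
  subgroup K -> has_index K m -> generated_by_k K k ->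
  exists n, (m <= n * b'.+1)%N /\ (n * a + 1 <= k)%N.
Proof.
move=> HK [t Ht] [s [Hs Hgen]].
have := free_bound HK Ht Hs Hgen; have := m_bound HK Ht.
set n := #|S0 _|; move=> Hm Hk; exists n; split => //.
move: Hk; rewrite mulnS; lia.
Qed.

Lemma index_pos (G : AbsGroup) (K : G -> Prop) m : has_index K m -> (0 < m)%N.
Proof. by case=> t /(_ (@gone G)) [i _]; case: m i t => [[]|]. Qed.

Section K0.
Variables (a b' : nat).
Local Notation G := (Grp a.+1 b').
Definition K0 (g : G) : Prop := g.2 = 0%R.

Lemma K0_sub : subgroup K0.
Proof.
split; first by [].
split; first by move=> x y; rewrite /K0 /= => -> ->; rewrite addr0.
by move=> x; rewrite /K0 /= => ->; rewrite oppr0.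
Qed.

Lemma K0_index : has_index K0 b'.+1.
Proof.
exists (fun i => ((fg_one a.+1, i) : G)) => g; exists g.2; split.
  by rewrite /K0 /= addNr.
move=> i; rewrite /K0 /= => /eqP; rewrite addrC subr_eq0 => /eqP //.
Qed.

Definition s0 (j : 'I_a.+1) : G := (fg_of [:: (j, false)], 0%R).

Lemma eval_s0 w : eval_word s0 w = ((fg_of w, 0%R) : G).
Proof.
elim: w => [|[j bb] w IH]; first by congr (_, _); apply: val_inj.
rewrite /= IH.
have -> : (if bb then g_inv (s0 j) else s0 j) = (fg_of [:: (j, bb)], 0%R).
  by case: bb => //; rewrite /g_inv /= oppr0; congr (_, _); apply: val_inj.
rewrite /g_mul /= addr0; congr (_, _); apply: val_inj.
by rewrite /fg_mul /fg_of /= red_red.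
Qed.

Lemma K0_gen : generated_by_k K0 a.+1.
Proof.
exists s0; split => // g Hg; exists (val g.1).
by rewrite eval_s0 fg_ofK -Hg -surjective_pairing.
Qed.

Lemma K0_min : min_gens K0 a.+1.
Proof.
split; first exact: K0_gen.
move=> j Hj; have [n [Hm Hk]] := LB K0_sub K0_index Hj.
have : (0 < n)%N by case: n Hm {Hk}.
move: Hk; case: n {Hm} => // n; rewrite mulSn; lia.
Qed.
End K0.

Local Open Scope ring_scope.

Theorem proposition2p2 (q : rat) (hq : 0 < q) :
  exists G : AbsGroup, finitely_presented G /\ rank_gradient_is G q.
Proof.
set a := `|numq q|%N; set b' := (`|denq q|%N).-1.
have Ha : numq q = a%:Z by rewrite /a gtz0_abs // numq_gt0.
have Hb : denq q = (b'.+1)%:Z.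
  rewrite /b' prednK ?gtz0_abs ?denq_gt0 //.
  by rewrite absz_gt0 denq_neq0.
have Hq : q = a%:R / (b'.+1)%:R.
  by rewrite -[q in LHS]divq_num_den Ha Hb.
have a0 : (0 < a)%N by rewrite /a absz_gt0 numq_eq0 lt0r_neq0.
exists (Grp a.+1 b'); split; first exact: Grp_fp.
split.
- move=> K m k HK Hi [Hg _].
  have m0 := index_pos Hi.
  have [n [Hm Hk]] := LB HK Hi Hg.
  have k1 : (1 <= k)%N by lia.
  rewrite Hq ler_pdivlMr ?ltr0n // mulrAC ler_pdivrMr ?ltr0n //.
  rewrite -(natrB _ k1) -!natrM ler_nat.
  apply: (leq_trans (leq_mul (leqnn a) Hm)).
  rewrite mulnA leq_mul2r; apply/orP; right.
  by move: Hk; rewrite mulnC; lia.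
- move=> eps Heps; exists (@K0 a b'), b'.+1, a.+1; split.
  + exact: K0_sub.
  + exact: K0_index.
  + exact: K0_min.
  + rewrite -!pmulrn -[a.+1]addn1 natrD addrK -Hq ltrDl //.
Qed.
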